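(* Let $q \in \mathbb{R}^d$ and let $\mathcal{Q} = \lbrace i : q[i] \neq 0 \rbrace \subset \lbrace 1,\ldots,d\rbrace$. Let $\lbrace z_1,\ldots,z_m\rbrace \subset \mathbb{R}^d$ be a set of orthonormal vectors, and let $\mathcal{Z}_j = \lbrace i : z_j[i] \neq 0 \rbrace$ for $j = 1,\ldots,m$. Let $u$ be the output of twice-iterated classical Gram-Schmidt applied to $q$ over $\lbrace z_1,\ldots,z_m\rbrace$, i.e. $t_0 = q$, $t_{j+1} = t_j - \sum_{l=1}^m (t_j' z_l) z_l$ for $j = 0,1$, and $u = t_2$ (in exact arithmetic). Then $$\mathcal{U} := \lbrace i : u[i] \neq 0\rbrace \subset \Big(\bigcup_{j \in \mathfrak{Q}} \mathcal{Z}_j\Big) \cup \mathcal{Q}, \qquad \text{where } \mathfrak{Q} = \lbrace j : \mathcal{Q} \cap \mathcal{Z}_j \neq \emptyset \rbrace \subset \lbrace 1,\ldots,m\rbrace.$$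
   Context: For a vector $z \in \mathbb{R}^d$, $z[i]$ denotes its $i$-th component; $'$ denotes transpose. *)

(* Defs.v *)
(* Vectors in R^d are row vectors 'rV[R]_d; components are
   indexed by 'I_d (0-based, i.e. {1..d} shifted). *)
From mathcomp Require Import all_boot all_order all_algebra.
Set Implicit Arguments. Unset Strict Implicit. Unset Printing Implicit Defensive.
Import Order.TTheory GRing.Theory Num.Theory.
Local Open Scope ring_scope.

Definition dotv (R : realFieldType) (d : nat) (u v : 'rV[R]_d) : R :=
  \sum_(i < d) u 0 i * v 0 i.

Definition orthonormal_fam (R : realFieldType) (d m : nat) (z : 'I_m -> 'rV[R]_d) : Prop :=
  forall j l : 'I_m, dotv (z j) (z l) = (j == l)%:R.

Definition cgs_step (R : realFieldType) (d m : nat) (z : 'I_m -> 'rV[R]_d)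
  (t : 'rV[R]_d) : 'rV[R]_d :=
  t - \sum_(l < m) dotv t (z l) *: z l.

Definition cgs2 (R : realFieldType) (d m : nat) (z : 'I_m -> 'rV[R]_d)
  (q : 'rV[R]_d) : 'rV[R]_d :=
  cgs_step z (cgs_step z q).

Definition supp (R : realFieldType) (d : nat) (v : 'rV[R]_d) : {set 'I_d} :=
  [set i | v 0 i != 0].

(* Main.v *)
Require Import Defs.
From mathcomp Require Import all_boot all_order all_algebra.
Import Order.TTheory GRing.Theory Num.Theory.
Local Open Scope ring_scope.

Lemma dotvB (R : realFieldType) (d : nat) (u v w : 'rV[R]_d) :
  dotv (u - v) w = dotv u w - dotv v w.
Proof.
rewrite /dotv -sumrB; apply: eq_bigr => i _.
by rewrite !mxE mulrBl.
Qed.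

Lemma dotv_sum (R : realFieldType) (d m : nat) (c : 'I_m -> R) (z : 'I_m -> 'rV[R]_d) w :
  dotv (\sum_(l < m) c l *: z l) w = \sum_(l < m) c l * dotv (z l) w.
Proof.
rewrite /dotv.
transitivity (\sum_(l < m) \sum_(i < d) c l * (z l 0 i * w 0 i)); last first.
  by apply: eq_bigr => l _; rewrite mulr_sumr.
rewrite [RHS]exchange_big /=; apply: eq_bigr => i _.
rewrite summxE mulr_suml; apply: eq_bigr => l _.
by rewrite mxE mulrA.
Qed.

Lemma dot_step (R : realFieldType) (d m : nat) (z : 'I_m -> 'rV[R]_d) t l :
  orthonormal_fam z -> dotv (cgs_step z t) (z l) = 0.
Proof.
move=> hz; rewrite /cgs_step dotvB dotv_sum.
rewrite (bigD1 l) //= hz eqxx mulr1 big1 ?addr0 ?subrr // => k hk.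
by rewrite hz (negbTE hk) mulr0.
Qed.

Theorem mainTheorem1 (R : realFieldType) (d m : nat)
  (q : 'rV[R]_d) (z : 'I_m -> 'rV[R]_d) :
  orthonormal_fam z ->
  supp (cgs2 z q) \subset
    (\bigcup_(j < m | supp q :&: supp (z j) != set0) supp (z j)) :|: supp q.
Proof.
move=> hz.
have -> : cgs2 z q = cgs_step z q.
  rewrite /cgs2 {1}/cgs_step big1 ?subr0 // => l _.
  by rewrite dot_step // scale0r.
apply/subsetP => i; rewrite inE /cgs_step !mxE summxE => hi.
rewrite in_setU.
have [qi|qi] := eqVneq (q 0 i) 0; last by rewrite inE qi orbT.
apply/orP; left.
move: hi; rewrite qi sub0r oppr_eq0 => hs.
have /existsP [l hl] : [exists l : 'I_m, (dotv q (z l) *: z l) 0 i != 0].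
  apply: contraT => /existsPn hn; move: hs.
  by rewrite big1 ?eqxx // => l _; exact/eqP/negbNE/hn.
rewrite mxE mulf_eq0 negb_or in hl; case/andP: hl => hd hzl.
apply/bigcupP; exists l; last by rewrite inE.
apply/set0Pn.
have /existsP [k hk] : [exists k : 'I_d, q 0 k * z l 0 k != 0].
  apply: contraT => /existsPn hn; move: hd.
  by rewrite /dotv big1 ?eqxx // => k _; exact/eqP/negbNE/hn.
exists k; rewrite mulf_eq0 negb_or in hk; case/andP: hk => h1 h2.
by rewrite !inE h1 h2.
Qed.
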